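(* Let $\Gamma$ be a Deza graph with parameters $(n,k,k-1,a)$, $k>1$, $\beta=1$. Let $x,y$ be $NA$-vertices with $C(x)\ne C(y)$. Then: (1) if some vertex of $\{x,x_b\}$ is adjacent to some vertex of $\{y,y_b\}$, or some vertex of $\{x',x_b'\}$ is adjacent to some vertex of $\{y',y_b'\}$, then all possible edges between $\{x,x_b\}$ and $\{y,y_b\}$ are present and all possible edges between $\{x',x_b'\}$ and $\{y',y_b'\}$ are present; (2) if some vertex of $\{x,x_b\}$ is adjacent to some vertex of $\{y',y_b'\}$, or some vertex of $\{x',x_b'\}$ is adjacent to some vertex of $\{y,y_b\}$, then all possible edges between $\{x,x_b\}$ and $\{y',y_b'\}$ are present and all possible edges between $\{x',x_b'\}$ and $\{y,y_b\}$ are present; (3) the number of edges between $C(x)$ and $C(y)$ is $0$, $8$ or $16$.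
   Context: A Deza graph with parameters $(n,k,b,a)$, $a\le b$, is a $k$-regular graph on $n$ vertices in which any two distinct vertices have $a$ or $b$ common neighbours; $\beta$ is the number of vertices $u\ne v$ with exactly $b$ common neighbours with a given vertex $v$. Since $\beta=1$, for each vertex $x$ let $x_b$ denote the unique vertex having $b=k-1$ common neighbours with $x$. A vertex $x$ is an $A$-vertex if $x$ is adjacent to $x_b$, and an $NA$-vertex otherwise. For an $NA$-vertex $x$, $x'$ denotes the unique neighbour of $x$ not adjacent to $x_b$, $x_b'=(x')_b=(x_b)'$, and $C(x)=\{x,x',x_b,x_b'\}$. *)

(* Defs.v *)
From mathcomp Require Import all_boot.
Set Implicit Arguments. Unset Strict Implicit. Unset Printing Implicit Defensive.

Section Deza.
Variables (T : finType) (e : rel T).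

Definition simple_graph := symmetric e /\ irreflexive e.

Definition nbhd (x : T) : {set T} := [set y | e x y].
Definition cn (x y : T) : nat := #|nbhd x :&: nbhd y|.

Definition deza_graph (n k b a : nat) :=
  [/\ simple_graph, #|T| = n, (forall x, #|nbhd x| = k), a <= b &
      forall x y, x != y -> cn x y = a \/ cn x y = b].

Definition beta_at (b : nat) (v : T) : nat := #|[set u | (u != v) && (cn v u == b)]|.

(* x_b : the (unique, when beta = 1) vertex having b common neighbours with x *)
Definition vb (b : nat) (x : T) : T :=
  odflt x [pick u | (u != x) && (cn x u == b)].

Definition A_vertex (b : nat) (x : T) : bool := e x (vb b x).
Definition NA_vertex (b : nat) (x : T) : bool := ~~ e x (vb b x).

(* x' : the unique neighbour of x not adjacent to x_b *)
Definition vprime (b : nat) (x : T) : T :=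
  odflt x [pick y | e x y && ~~ e (vb b x) y].

Definition vbprime (b : nat) (x : T) : T := vprime b (vb b x).

Definition Cset (b : nat) (x : T) : {set T} :=
  [set x; vprime b x; vb b x; vbprime b x].

Definition all_edges (A B : {set T}) : Prop := forall u v, u \in A -> v \in B -> e u v.
Definition some_edge (A B : {set T}) : Prop := exists u v, [/\ u \in A, v \in B & e u v].

Definition n_edges (A B : {set T}) : nat :=
  #|[set p : T * T | [&& p.1 \in A, p.2 \in B & e p.1 p.2]]|.
End Deza.

(* Main.v *)
Require Import Defs.
From mathcomp Require Import all_boot.
Set Implicit Arguments. Unset Strict Implicit. Unset Printing Implicit Defensive.

Section D.
Variables (T : finType) (e : rel T) (n k a : nat).
Hypothesis HD : deza_graph e n k k.-1 a.
Hypothesis Hk : 1 < k.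
Hypothesis Hb : forall v, beta_at e k.-1 v = 1.
Local Notation N := (nbhd e).
Local Notation s := (vb e k.-1).
Local Notation m := (vprime e k.-1).

Lemma eC u t : e u t = e t u.
Proof. by case: HD => [[/(_ u t) -> _] _ _ _ _]. Qed.
Lemma eirr u : e u u = false.
Proof. by case: HD => [[_ /(_ u) ->] _ _ _ _]. Qed.
Lemma cardN u : #|N u| = k.
Proof. by case: HD. Qed.
Lemma inN u t : (t \in N u) = e u t.
Proof. by rewrite inE. Qed.
Lemma cnC u t : cn e u t = cn e t u.
Proof. by rewrite /cn setIC. Qed.

Lemma partnerP u : exists z, [set t | (t != u) && (cn e u t == k.-1)] = [set z].
Proof. by apply/cards1P; have := Hb u; rewrite /beta_at => ->. Qed.

Lemma L1 u : s u != u /\ cn e u (s u) = k.-1.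
Proof.
have [z Hz] := partnerP u.
have : z \in [set t | (t != u) && (cn e u t == k.-1)] by rewrite Hz set11.
rewrite inE => Hzz.
rewrite /vb; case: pickP => [t /andP[-> /eqP ->] //|H].
by move: (H z); rewrite Hzz.
Qed.

Lemma L2 u t : t != u -> cn e u t = k.-1 -> t = s u.
Proof.
move=> H1 H2; have [z Hz] := partnerP u.
have : t \in [set t | (t != u) && (cn e u t == k.-1)] by rewrite inE H1 H2 eqxx.
have : s u \in [set t | (t != u) && (cn e u t == k.-1)].
  by case: (L1 u) => A B; rewrite inE A B eqxx.
by rewrite Hz !inE => /eqP -> /eqP ->.
Qed.

Lemma L3 u : s (s u) = u.
Proof.
case: (L1 u) => A B; apply/esym/L2; first by rewrite eq_sym.
by rewrite cnC.
Qed.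

Lemma s_inj : injective s.
Proof. exact: (can_inj L3). Qed.

Lemma L4 u t : t != u -> t != s u -> cn e u t = a.
Proof.
move=> H1 H2; case: HD => _ _ _ _ /(_ u t); rewrite eq_sym H1 => /(_ isT) [//|].
by move/(L2 H1)/eqP; rewrite (negbTE H2).
Qed.

Lemma setD_m u : N u :\: N (s u) = [set t | e u t && ~~ e (s u) t].
Proof. by apply/setP => t; rewrite !inE andbC. Qed.

Lemma cardD u : #|N u :\: N (s u)| = 1.
Proof.
have := cardsID (N (s u)) (N u); rewrite cardN.
have -> : #|N u :&: N (s u)| = k.-1 by case: (L1 u).
move: Hk; case: k => // k' _ /= H; apply/eqP; rewrite -(eqn_add2l k') H addn1 //.
Qed.

Lemma L6 u : e u (m u) /\ ~~ e (s u) (m u).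
Proof.
have /cards1P [z Hz] : #|N u :\: N (s u)| == 1 by rewrite cardD.
have : z \in N u :\: N (s u) by rewrite Hz set11.
rewrite setD_m inE => Hzz.
rewrite /vprime; case: pickP => [t /andP[-> ->] //|H].
by move: (H z); rewrite Hzz.
Qed.

Lemma L7 u t : e u t -> ~~ e (s u) t -> t = m u.
Proof.
move=> H1 H2; have /cards1P [z Hz] : #|N u :\: N (s u)| == 1 by rewrite cardD.
have : t \in N u :\: N (s u) by rewrite setD_m inE H1 H2.
have : m u \in N u :\: N (s u) by case: (L6 u) => A B; rewrite setD_m inE A B.
by rewrite Hz !inE => /eqP -> /eqP ->.
Qed.

Lemma cn_split u t : cn e u t = #|N u :&: N (s u) :&: N t| + e t (m u).
Proof.
rewrite /cn -(cardsID (N (s u)) (N u :&: N t)).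
have -> : N u :&: N t :&: N (s u) = N u :&: N (s u) :&: N t.
  by rewrite -!setIA [N t :&: _]setIC.
congr (_ + _).
have -> : N u :&: N t :\: N (s u) = N t :&: [set m u].
  apply/setP => z; rewrite !inE; apply/idP/idP.
    by case/and3P => C A B; rewrite B (L7 A C) eqxx.
  case/andP => B /eqP Hz; subst z; case: (L6 u) => A C; by rewrite A C B.
case E: (e t (m u)).
  have -> : N t :&: [set m u] = [set m u].
    by apply/setP => z; rewrite !inE; case: (z =P m u) => [->|_]; rewrite ?E ?andbF.
  by rewrite cards1.
have -> : N t :&: [set m u] = set0.
  by apply/setP => z; rewrite !inE; case: (z =P m u) => [->|_]; rewrite ?E ?andbF.
by rewrite cards0.
Qed.

Lemma L8 u t : t != u -> t != s u -> e t (m u) = e t (m (s u)).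
Proof.
move=> H1 H2.
have E1 := L4 H1 H2.
have E2 : cn e (s u) t = a by apply: L4; rewrite ?L3.
move: E1 E2; rewrite !cn_split L3 [N (s u) :&: _]setIC => <- /eqP.
by rewrite eqn_add2l => /eqP; case: (e t _); case: (e t _).
Qed.

Lemma L11_aux u : s (m u) = m (s u) /\ m (m u) = u.
Proof.
case: (L6 u) => A1 A2; case: (L6 (s u)); rewrite L3 => B1 B2.
have Hne : m (s u) != m u by apply: contraNneq A2 => <-.
have key : N (m u) :&: N (m (s u)) = N (m u) :\ u.
  apply/setP => z; rewrite !inE.
  have [->|zu] := eqVneq z u.
    by rewrite [e (m (s u)) u]eC (negbTE B2) andbF.
  have [->|zsu] := eqVneq z (s u).
    by rewrite [e (m u) (s u)]eC (negbTE A2).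
  by rewrite ![e (m _) z]eC (L8 zu zsu) andbb.
have H : cn e (m u) (m (s u)) = k.-1.
  rewrite /cn key; apply/eqP; rewrite -(eqn_add2l 1).
  have := cardsD1 u (N (m u)); rewrite inN eC A1 cardN => <-.
  by move: Hk; case: k.
have Hs : s (m u) = m (s u) by apply/esym/L2.
split=> //; apply/esym/L7; first by rewrite eC.
by rewrite Hs eC.
Qed.

Lemma L11 u : s (m u) = m (s u). Proof. by case: (L11_aux u). Qed.
Lemma L12 u : m (m u) = u. Proof. by case: (L11_aux u). Qed.
Lemma m_inj : injective m. Proof. exact: (can_inj L12). Qed.

Lemma B' t z : m t != z -> m t != s z -> e t (s z) = e t z.
Proof.
move=> H1 H2.
have := @L8 (m z) t.
rewrite L12 (L11 z) L12 => -> //.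
  by apply: contra H1 => /eqP ->; rewrite L12.
by apply: contra H2 => /eqP ->; rewrite L12.
Qed.


Local Notation NA := (NA_vertex e k.-1).
Local Notation Cs := (Cset e k.-1).

Lemma NA_s u : NA u -> NA (s u).
Proof. by rewrite /NA_vertex L3 eC. Qed.

Lemma A_m u : e u (s u) -> m u = s u.
Proof. by move=> H; apply/esym/L7; rewrite // eirr. Qed.

Lemma NA_m u : NA u -> NA (m u).
Proof.
rewrite /NA_vertex => H; apply/negP => /A_m; rewrite L12 L11 => E.
case: (L6 (s u)); rewrite -E => A _; by rewrite eC A in H.
Qed.

Lemma even_closed_aux N0 : forall J : {set T}, #|J| <= N0 ->
  (forall z, z \in J -> s z \in J) -> ~~ odd #|J|.
Proof.
elim: N0 => [|N0 IH] J HJ Hc.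
  by move: HJ; rewrite leqn0 => /eqP ->.
case: (set_0Vmem J) => [->|[z Hz]]; first by rewrite cards0.
have Hsz : s z \in J :\ z by rewrite !inE Hc // andbT; case: (L1 z).
rewrite (cardsD1 z) Hz (cardsD1 (s z) (J :\ z)) Hsz.
have : ~~ odd #|J :\ z :\ s z|.
  apply: IH.
    move: HJ; rewrite (cardsD1 z) Hz (cardsD1 (s z) (J :\ z)) Hsz.
    by rewrite !add1n ltnS => /ltnW.
  move=> t; rewrite !inE => /and3P [H1 H2 H3].
  rewrite Hc // andbT; apply/andP; split.
    by apply: contra H2 => /eqP /s_inj ->.
  by apply: contra H1 => /eqP <-; rewrite L3.
by rewrite !add1n /= negbK.
Qed.

Lemma even_closed (J : {set T}) : (forall z, z \in J -> s z \in J) -> ~~ odd #|J|.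
Proof. exact: (even_closed_aux (leqnn _)). Qed.

Lemma ms_ne u : ~~ e u (m (s u)).
Proof. by case: (L6 (s u)); rewrite L3. Qed.

Lemma a_even x : NA x -> ~~ odd a.
Proof.
rewrite /NA_vertex => NAx.
case: (L6 x) => A1 A2.
have <- : cn e x (m x) = a.
  apply: L4; first by apply: contraTneq A1 => ->; rewrite eirr.
  by apply: contraNneq NAx => <-.
apply: even_closed => z; rewrite !inE => /andP [Hxz Hmz].
have Hx1 : m x != z by apply: contraTneq Hmz => <-; rewrite eirr.
have Hx2 : m x != s z.
  apply: contraNneq (ms_ne x) => E; rewrite -L11 E L3 //.
have Hy1 : m (m x) != z by rewrite L12; apply: contraTneq Hxz => <-; rewrite eirr.
have Hy2 : m (m x) != s z.
  by rewrite L12; apply: contraNneq NAx => E; rewrite {2}E L3.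
by rewrite (B' Hx1 Hx2) (B' Hy1 Hy2) Hxz Hmz.
Qed.

Lemma CsE v : Cs v = [set v; m v; s v; m (s v)].
Proof. by []. Qed.

Lemma Cs_v v : v \in Cs v. Proof. by rewrite CsE !inE eqxx. Qed.
Lemma Cs_m v : m v \in Cs v. Proof. by rewrite CsE !inE eqxx !orbT. Qed.
Lemma Cs_s v : s v \in Cs v. Proof. by rewrite CsE !inE eqxx !orbT. Qed.
Lemma Cs_ms v : m (s v) \in Cs v. Proof. by rewrite CsE !inE eqxx !orbT. Qed.

Lemma CsC v w : w \in Cs v -> Cs w = Cs v.
Proof.
rewrite CsE !inE -!orbA => /or4P [] /eqP ->; rewrite !CsE ?L11 ?L12 ?L3 ?L11 ?L12 ?L3;
  apply/setP => t; rewrite !inE -!orbA; by apply/idP/idP => /or4P [] ->; rewrite ?orbT.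
Qed.

Lemma par v w : NA v -> NA w -> w \notin Cs v -> e (m v) w = e v (m w).
Proof.
rewrite /NA_vertex => NAv NAw Hw.
have Hwv : w != v by apply: contraNneq Hw => ->; exact: Cs_v.
have Hwsv : w != s v by apply: contraNneq Hw => ->; exact: Cs_s.
have Hcn := L4 Hwv Hwsv.
have Hmm : m w != m v by apply: contra Hwv => /eqP /m_inj ->.
case: (L6 v) => Av _; case: (L6 w) => Aw _.
have := a_even NAv; rewrite -Hcn /cn.
rewrite (cardsD1 (m v)) (cardsD1 (m w) (_ :\ m v)) !inE Av Aw Hmm /= andbT.
set J := (X in #|X|).
have HJ : ~~ odd #|J|.
  apply: even_closed => z; rewrite !inE => /and4P [H1 H2 H3 H4].
  have Hs1 : s z != m w.
    by apply: contraNneq (ms_ne w) => E; rewrite -L11 -E L3.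
  have Hs2 : s z != m v.
    by apply: contraNneq (ms_ne v) => E; rewrite -L11 -E L3.
  have Hb1 : m v != z by rewrite eq_sym.
  have Hb2 : m v != s z by rewrite eq_sym.
  have Hc1 : m w != z by rewrite eq_sym.
  have Hc2 : m w != s z by rewrite eq_sym.
  by rewrite Hs1 Hs2 (B' Hb1 Hb2) (B' Hc1 Hc2) H3 H4.
rewrite [e (m v) w]eC !oddD (negbTE HJ).
by case: (e w (m v)); case: (e v (m w)).
Qed.

Lemma B2 v w : w \notin Cs v -> e v (s w) = e v w.
Proof.
move=> Hw; apply: B'.
  by apply: contraNneq Hw => <-; exact: Cs_m.
apply: contraNneq Hw => E; rewrite -(L3 w) -E L11; exact: Cs_ms.
Qed.

Lemma blk v w u t : w \notin Cs v -> v \notin Cs w ->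
  u \in [set v; s v] -> t \in [set w; s w] -> e u t = e v w.
Proof.
move=> H1 H2 /set2P [] -> /set2P [] -> //.
- exact: B2.
- by rewrite eC B2 // eC.
- rewrite B2; last by rewrite (CsC (Cs_s v)).
  by rewrite eC B2 // eC.
Qed.

Lemma n_edgesE (A B : {set T}) :
  n_edges e A B = \sum_(u in A) \sum_(t in B) (e u t : nat).
Proof.
rewrite /n_edges -sum1_card.
transitivity (\sum_(u in A) \sum_(t in B | e u t) 1).
  by rewrite pair_big_dep /=; apply: eq_bigl => -[u t]; rewrite inE.
apply: eq_bigr => u _; rewrite big_mkcondr /=.
by apply: eq_bigr => t _; case: (e u t).
Qed.

Lemma sum4 v (F : T -> nat) : NA v ->
  \sum_(u in Cs v) F u = F v + (F (m v) + (F (s v) + F (s (m v)))).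
Proof.
rewrite /NA_vertex => NAv.
case: (L6 v) => A1 A2.
have h1 : v != m v by apply: contraTneq A1 => <-; rewrite eirr.
have h2 : v != s v by case: (L1 v); rewrite eq_sym.
have h3 : v != s (m v).
  by apply: contraNneq NAv => E; rewrite {2}E L3.
have h4 : m v != s v by apply: contraNneq NAv => <-.
have h5 : m v != s (m v) by case: (L1 (m v)); rewrite eq_sym.
have h6 : s v != s (m v) by apply: contra h1 => /eqP /s_inj /eqP.
have -> : Cs v = v |: (m v |: (s v |: [set s (m v)])).
  by apply/setP => t; rewrite CsE -L11 !inE !orbA.
rewrite big_setU1 /=; last by rewrite !inE !negb_or h1 h2 h3.
rewrite big_setU1 /=; last by rewrite !inE !negb_or h4 h5.
by rewrite big_setU1 /= ?big_set1 // inE.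
Qed.

Lemma main x y : NA x -> NA y -> Cs x != Cs y ->
  [/\ (some_edge e [set x; s x] [set y; s y] \/ some_edge e [set m x; m (s x)] [set m y; m (s y)]) ->
        all_edges e [set x; s x] [set y; s y] /\ all_edges e [set m x; m (s x)] [set m y; m (s y)],
      (some_edge e [set x; s x] [set m y; m (s y)] \/ some_edge e [set m x; m (s x)] [set y; s y]) ->
        all_edges e [set x; s x] [set m y; m (s y)] /\ all_edges e [set m x; m (s x)] [set y; s y] &
      n_edges e (Cs x) (Cs y) \in [:: 0; 8; 16]].
Proof.
move=> NAx NAy HC.
have nin p q : p \in Cs x -> q \in Cs y -> q \notin Cs p /\ p \notin Cs q.
  move=> Hp Hq; split; apply/negP => H.
    by move: HC; rewrite -(CsC Hp) -(CsC Hq) (CsC H) eqxx.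
  by move: HC; rewrite -(CsC Hp) -(CsC Hq) (CsC H) eqxx.
have blk2 p q u t : p \in Cs x -> q \in Cs y ->
    u \in [set p; s p] -> t \in [set q; s q] -> e u t = e p q.
  move=> Hp Hq; case: (nin p q Hp Hq) => H1 H2; exact: blk.
have P1 : e (m x) (m y) = e x y.
  rewrite (par NAx (NA_m NAy)) ?L12 //; case: (nin x (m y) (Cs_v x) (Cs_m y)) => //.
have P2 : e (m x) y = e x (m y).
  rewrite (par NAx NAy) //; case: (nin x y (Cs_v x) (Cs_v y)) => //.
rewrite -!L11.
have Ex := Cs_v x; have Ey := Cs_v y; have Emx := Cs_m x; have Emy := Cs_m y.
split.
- move=> H.
  have Exy : e x y.
    case: H => [[u [t [Hu Ht E]]]|[u [t [Hu Ht E]]]].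
      by rewrite -(blk2 x y u t).
    by rewrite -P1 -(blk2 (m x) (m y) u t).
  split=> u t Hu Ht.
    by rewrite (blk2 x y u t).
  by rewrite (blk2 (m x) (m y) u t) // P1.
- move=> H.
  have Exy : e x (m y).
    case: H => [[u [t [Hu Ht E]]]|[u [t [Hu Ht E]]]].
      by rewrite -(blk2 x (m y) u t).
    by rewrite -P2 -(blk2 (m x) y u t).
  split=> u t Hu Ht.
    by rewrite (blk2 x (m y) u t).
  by rewrite (blk2 (m x) y u t) // P2.
- rewrite n_edgesE (sum4 _ NAx) !(sum4 _ NAy).
  rewrite [e x (s y)](blk2 x y x (s y) Ex Ey (set21 _ _) (set22 _ _)).
  rewrite [e x (s (m y))](blk2 x (m y) x (s (m y)) Ex Emy (set21 _ _) (set22 _ _)).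
  rewrite [e (m x) (s y)](blk2 (m x) y (m x) (s y) Emx Ey (set21 _ _) (set22 _ _)).
  rewrite [e (m x) (s (m y))](blk2 (m x) (m y) (m x) (s (m y)) Emx Emy (set21 _ _) (set22 _ _)).
  rewrite [e (s x) y](blk2 x y (s x) y Ex Ey (set22 _ _) (set21 _ _)).
  rewrite [e (s x) (m y)](blk2 x (m y) (s x) (m y) Ex Emy (set22 _ _) (set21 _ _)).
  rewrite [e (s x) (s y)](blk2 x y (s x) (s y) Ex Ey (set22 _ _) (set22 _ _)).
  rewrite [e (s x) (s (m y))](blk2 x (m y) (s x) (s (m y)) Ex Emy (set22 _ _) (set22 _ _)).
  rewrite [e (s (m x)) y](blk2 (m x) y (s (m x)) y Emx Ey (set22 _ _) (set21 _ _)).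
  rewrite [e (s (m x)) (m y)](blk2 (m x) (m y) (s (m x)) (m y) Emx Emy (set22 _ _) (set21 _ _)).
  rewrite [e (s (m x)) (s y)](blk2 (m x) y (s (m x)) (s y) Emx Ey (set22 _ _) (set22 _ _)).
  rewrite [e (s (m x)) (s (m y))](blk2 (m x) (m y) (s (m x)) (s (m y)) Emx Emy (set22 _ _) (set22 _ _)).
  rewrite P1 P2.
  by case: (e x y); case: (e x (m y)).
Qed.

End D.


Theorem lemma17 (T : finType) (e : rel T) (n k a : nat) (x y : T) :
  deza_graph e n k k.-1 a -> 1 < k ->
  (forall v, beta_at e k.-1 v = 1) ->
  NA_vertex e k.-1 x -> NA_vertex e k.-1 y ->
  Cset e k.-1 x != Cset e k.-1 y ->
  let xb := vb e k.-1 x in let yb := vb e k.-1 y in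
  let x' := vprime e k.-1 x in let y' := vprime e k.-1 y in
  let xb' := vbprime e k.-1 x in let yb' := vbprime e k.-1 y in
  [/\ (some_edge e [set x; xb] [set y; yb] \/ some_edge e [set x'; xb'] [set y'; yb']) ->
        all_edges e [set x; xb] [set y; yb] /\ all_edges e [set x'; xb'] [set y'; yb'],
      (some_edge e [set x; xb] [set y'; yb'] \/ some_edge e [set x'; xb'] [set y; yb]) ->
        all_edges e [set x; xb] [set y'; yb'] /\ all_edges e [set x'; xb'] [set y; yb] &
      n_edges e (Cset e k.-1 x) (Cset e k.-1 y) \in [:: 0; 8; 16]].

Proof.
move=> HD Hk Hb NAx NAy HC.
rewrite /vbprime.
exact: (main HD Hk Hb NAx NAy HC).
Qed.
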